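(* Let $n\geq 2$ be an integer. The annihilating-ideal graph $\mathbb{AG}(\mathbb{Z}_n)$ is perfect if and only if $n$ is of one of the forms $p_1^{\alpha_1}$, $p_1^{\alpha_1}p_2^{\alpha_2}$, $p_1^{\alpha_1}p_2p_3$, or $p_1p_2p_3p_4$, where $p_1,p_2,p_3,p_4$ are distinct primes and $\alpha_1,\alpha_2\in\mathbb{N}=\{1,2,3,\dots\}$.
   Context: For a commutative ring $R$ with unity, the annihilating-ideal graph $\mathbb{AG}(R)$ is the simple graph whose vertex set is the set of all non-zero ideals $I$ of $R$ with non-zero annihilator (i.e. there is a non-zero ideal $J$ with $IJ=0$), and two distinct vertices $I,J$ are adjacent if and only if $IJ=0$. A graph $G$ is perfect if $\omega(H)=\chi(H)$ (clique number equals chromatic number) for every induced subgraph $H$ of $G$. *)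

(* Defs.v *)
From mathcomp Require Import all_boot all_order all_algebra.
Set Implicit Arguments. Unset Strict Implicit. Unset Printing Implicit Defensive.
Import GRing.Theory.
Local Open Scope ring_scope.

Section Ideals.
Variable R : finComNzRingType.

Definition is_ideal (I : {set R}) : bool :=
  [&& (0 : R) \in I,
      [forall x in I, forall y in I, x + y \in I] &
      [forall r : R, forall x in I, r * x \in I]].

Definition zero_ideal (I : {set R}) : bool := I == [set (0 : R)].

(* IJ = 0 : the product ideal (generated by all x*y, x in I, y in J)
   is zero iff every product x*y vanishes. *)
Definition ideal_prod_zero (I J : {set R}) : bool :=
  [forall x in I, forall y in J, x * y == 0].

Definition AG_vertices : {set {set R}} :=
  [set I | [&& is_ideal I, ~~ zero_ideal I &
     [exists J : {set R}, [&& is_ideal J, ~~ zero_ideal J & ideal_prod_zero I J]]]].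

Definition AG_adj : rel {set R} := fun I J => (I != J) && ideal_prod_zero I J.

End Ideals.

Section Graphs.
Variable T : finType.
Variable e : rel T.

Definition is_clique (K : {set T}) : bool :=
  [forall x in K, forall y in K, (x != y) ==> e x y].

Definition clique_number (S : {set T}) : nat :=
  \max_(K in powerset S | is_clique K) #|K|.

(* the subgraph induced on S admits a proper colouring with k colours
   (colours are the numbers < k; #|T| colours always suffice as codomain) *)
Definition colorable (S : {set T}) (k : nat) : bool :=
  [exists f : {ffun T -> 'I_#|T|},
     [forall x in S, (f x < k)%N] &&
     [forall x in S, forall y in S, e x y ==> (f x != f y)]].

(* chromatic number of the subgraph induced by S: least k with a proper
   k-colouring (k = #|S| always works) *)
Definition chromatic_number (S : {set T}) : nat :=
  \big[minn/#|S|]_(k < #|S|.+1 | colorable S k) k.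

Definition perfect (V : {set T}) : Prop :=
  forall S : {set T}, S \subset V -> clique_number S = chromatic_number S.

End Graphs.

(* Main.v *)
Require Import Defs.
From mathcomp Require Import all_boot all_order all_algebra.
From mathcomp Require Import zify.
Set Implicit Arguments. Unset Strict Implicit. Unset Printing Implicit Defensive.

(* Proof strategy:
   - generic graph lemma: if every nonempty induced subgraph has a simplicial or a
     dominated vertex then the graph is perfect; an induced C5 prevents perfectness;
   - ideals of Z_n are the sets M d of multiples of a divisor d of n;
   - shapes p^a, p^a q^b, p^a q r, pqrs satisfy the reduction property;
   - every other n contains an induced C5. *)

Lemma bigmin_le_seq (I : eqType) (r : seq I) (P : pred I) (F : I -> nat) x0 j :
  j \in r -> P j -> (\big[minn/x0]_(i <- r | P i) F i <= F j)%N.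
Proof.
elim: r => [|a r IH] //; rewrite in_cons big_cons => /orP[/eqP<-|jr] Pj.
  by rewrite Pj geq_minl.
case: (P a); last exact: IH.
by rewrite (leq_trans (geq_minr _ _)) // IH.
Qed.

Lemma bigmin_ge_seq (I : eqType) (r : seq I) (P : pred I) (F : I -> nat) x0 m :
  (m <= x0)%N -> (forall i, P i -> m <= F i)%N -> (m <= \big[minn/x0]_(i <- r | P i) F i)%N.
Proof.
move=> h0 hF; elim: r => [|a r IH]; first by rewrite big_nil.
rewrite big_cons; case Pa: (P a) => //.
by rewrite leq_min hF.
Qed.

Lemma c5_arith (x1 x2 x3 x4 x5 k : nat) : (k < 3 -> x1 < k -> x2 < k -> x3 < k -> x4 < k -> x5 < k ->
  x1 != x2 -> x2 != x3 -> x3 != x4 -> x4 != x5 -> x5 != x1 -> False)%N.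
Proof.
move=> hk; case: x1 => [|[|x1]] //; case: x2 => [|[|x2]] //; case: x3 => [|[|x3]] //;
case: x4 => [|[|x4]] //; case: x5 => [|[|x5]] //; lia.
Qed.

Section Graph.
Variable T : finType.
Variable e : rel T.
Hypothesis esym : symmetric e.
Hypothesis eirr : irreflexive e.

Definition simplicial (S : {set T}) v :=
  forall x y, x \in S -> y \in S -> e v x -> e v y -> x != y -> e x y.
Definition dominated (S : {set T}) v :=
  exists2 u, u \in S & [/\ u != v, ~~ e u v & forall y, y \in S -> e v y -> e u y].

Lemma clique_le (S K : {set T}) : K \subset S -> is_clique e K -> (#|K| <= clique_number e S)%N.
Proof.
move=> KS cK; rewrite /clique_number.
apply: (@leq_bigmax_cond _ (fun K => (K \in powerset S) && is_clique e K) (fun K => #|K|) K).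
by rewrite inE KS cK.
Qed.

Lemma clique_ub (S : {set T}) m : (forall K : {set T}, K \subset S -> is_clique e K -> #|K| <= m)%N ->
  (clique_number e S <= m)%N.
Proof.
move=> h; apply/bigmax_leqP => K /andP[]; rewrite inE => KS cK; exact: h.
Qed.

Lemma clique_le_card (S : {set T}) : (clique_number e S <= #|S|)%N.
Proof. by apply: clique_ub => K KS _; apply: subset_leq_card. Qed.

Lemma clique_mono (S S' : {set T}) : S' \subset S -> (clique_number e S' <= clique_number e S)%N.
Proof.
move=> sub; apply: clique_ub => K KS cK; apply: clique_le cK.
exact: subset_trans sub.
Qed.

Lemma colorable_clique (S : {set T}) k (K : {set T}) : colorable e S k -> K \subset S -> is_clique e K -> (#|K| <= k)%N.
Proof.
case/existsP=> f /andP[/forallP fk /forallP fp] KS /forallP cK.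
rewrite cardE -(size_map (fun x => val (f x))).
have -> : k = size (iota 0 k) by rewrite size_iota.
apply: uniq_leq_size.
  rewrite map_inj_in_uniq ?enum_uniq // => x y; rewrite !mem_enum => xK yK /= fxy.
  move/eqP: fxy; apply: contraTeq => nxy.
  have := forallP (implyP (cK x) xK) y; rewrite yK nxy /= => exy.
  have := forallP (implyP (fp x) (subsetP KS x xK)) y.
  by rewrite (subsetP KS y yK) exy /= -(inj_eq val_inj).
move=> c /mapP[x]; rewrite mem_enum => xK ->; rewrite mem_iota /=.
by have := implyP (fk x) (subsetP KS x xK).
Qed.

Definition nb (S : {set T}) v := [set y in S | e v y].

Lemma colorable0 k : colorable e set0 k.
Proof.
apply/existsP; exists [ffun x => enum_rank x]; apply/andP; split;
  apply/forallP => x; by rewrite inE.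
Qed.

Lemma colorable_omega (V : {set T}) :
  (forall S : {set T}, S \subset V -> S != set0 -> exists2 v, v \in S & simplicial S v \/ dominated S v) ->
  forall S : {set T}, S \subset V -> colorable e S (clique_number e S).
Proof.
move=> H S.
move: {2}#|S| (leqnn #|S|) => k; elim: k S => [|k IH] S.
  rewrite leqn0 cards_eq0 => /eqP-> _; exact: colorable0.
move=> Sk SV.
have [->|S0] := eqVneq S set0; first exact: colorable0.
have [v vS hv] := H S SV S0.
set S' := S :\ v.
have S'S : S' \subset S by apply: subsetDl.
have cS' : (#|S'| <= k)%N.
  by move: Sk; rewrite (cardsD1 v S) vS.
have /existsP[f /andP[/forallP fk /forallP fp]] := IH S' cS' (subset_trans S'S SV).
have wle := clique_mono S'S.
have wT : (clique_number e S <= #|T|)%N.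
  exact: leq_trans (clique_le_card S) (max_card _).
have inS' x : x \in S -> x != v -> x \in S'.
  by move=> xS xv; rewrite !inE xv.
case: hv => [simp | [u uS [uv euv dom]]].
-
  set N := nb S v.
  have cN : (#|N| < clique_number e S)%N.
    apply: (@leq_trans #|v |: N|); first by rewrite cardsU1 !inE eirr andbF.
    apply: clique_le.
      by apply/subsetP => x; rewrite !inE => /orP[/eqP->|/andP[]].
    apply/forallP => x; apply/implyP => xin; apply/forallP => y; apply/implyP => yin.
    apply/implyP => nxy.
    move: xin yin; rewrite !inE => /orP[/eqP xv|/andP[xS vx]] /orP[/eqP yv|/andP[yS vy]].
    + by rewrite xv yv eqxx in nxy.
    + by rewrite xv.
    + by rewrite yv esym.
    + exact: simp.
  have [c cw cnot] : exists2 c : nat, (c < clique_number e S)%N & c \notin [seq val (f x) | x <- enum N].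
    case: (boolP [exists c : 'I_(clique_number e S), val c \notin [seq val (f x) | x <- enum N]]).
      by case/existsP => c cn; exists (val c) => //; exact: ltn_ord.
    rewrite negb_exists => /forallP hc; exfalso; move: cN; apply/negP; rewrite -leqNgt.
    have := @uniq_leq_size _ (iota 0 (clique_number e S)) [seq val (f x) | x <- enum N] (iota_uniq _ _).
    rewrite size_iota size_map -cardE; apply => c; rewrite mem_iota /= => cl.
    have := hc (Ordinal cl); exact: negbNE.
  have cT : (c < #|T|)%N by apply: leq_trans cw wT.
  apply/existsP; exists [ffun x => if x == v then Ordinal cT else f x]; apply/andP; split.
    apply/forallP => x; apply/implyP => xS; rewrite ffunE.
    case: eqP => [_|/eqP xv] //=.
    by apply: leq_trans (implyP (fk x) (inS' x xS xv)) _.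
  apply/forallP => x; apply/implyP => xS; apply/forallP => y; apply/implyP => yS.
  apply/implyP => exy; rewrite !ffunE.
  case: (eqVneq x v) => [xv|xv]; case: (eqVneq y v) => [yv|yv].
  + by rewrite xv yv eirr in exy.
  + apply/negP => /eqP ce; apply: (negP cnot); apply/mapP; exists y.
      by rewrite mem_enum inE yS -xv.
    by rewrite -ce.
  + apply/negP => /eqP ce; apply: (negP cnot); apply/mapP; exists x.
      by rewrite mem_enum inE xS -yv esym.
    by rewrite ce.
  + have := forallP (implyP (fp x) (inS' x xS xv)) y.
    by rewrite (inS' y yS yv) exy.
-
  have uS' : u \in S' by rewrite inS'.
  apply/existsP; exists [ffun x => if x == v then f u else f x]; apply/andP; split.
    apply/forallP => x; apply/implyP => xS; rewrite ffunE.
    case: eqP => [_|/eqP xv].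
      exact: leq_trans (implyP (fk u) uS') wle.
    exact: leq_trans (implyP (fk x) (inS' x xS xv)) wle.
  have key y : y \in S -> y != v -> e v y -> f u != f y.
    move=> yS yv vy.
    have yu : y != u by apply: contraNneq euv => <-; rewrite esym.
    have := forallP (implyP (fp u) uS') y; rewrite (inS' y yS yv) /=.
    by move/implyP; apply; apply: dom.
  apply/forallP => x; apply/implyP => xS; apply/forallP => y; apply/implyP => yS.
  apply/implyP => exy; rewrite !ffunE.
  case: (eqVneq x v) => [xv|xv]; case: (eqVneq y v) => [yv|yv].
  + by rewrite xv yv eirr in exy.
  + by apply: key => //; rewrite -xv.
  + by rewrite eq_sym; apply: key => //; rewrite -yv esym.
  + have := forallP (implyP (fp x) (inS' x xS xv)) y.
    by rewrite (inS' y yS yv) exy.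
Qed.

Lemma perfect_of_reduction (V : {set T}) :
  (forall S : {set T}, S \subset V -> S != set0 -> exists2 v, v \in S & simplicial S v \/ dominated S v) ->
  perfect e V.
Proof.
move=> H S SV; apply/eqP; rewrite eqn_leq; apply/andP; split.
  rewrite /chromatic_number.
  apply: bigmin_ge_seq; first exact: clique_le_card.
  move=> k ck; apply: clique_ub => K KS cK; exact: colorable_clique ck KS cK.
have wle : (clique_number e S < #|S|.+1)%N by rewrite ltnS clique_le_card.
rewrite /chromatic_number.
apply: (@bigmin_le_seq _ _ _ (fun k : 'I_#|S|.+1 => val k) _ (Ordinal wle)).
  exact: mem_index_enum.
by rewrite /=; apply: (colorable_omega H SV).
Qed.

Lemma not_perfect_C5 (V : {set T}) a b c d f :
  a \in V -> b \in V -> c \in V -> d \in V -> f \in V ->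
  e a b -> e b c -> e c d -> e d f -> e f a ->
  ~~ e a c -> ~~ e a d -> ~~ e b d -> ~~ e b f -> ~~ e c f -> ~ perfect e V.
Proof.
move=> aV bV cV dV fV ab bc cd df fa nac nad nbd nbf ncf.
have nac' := negbTE nac; have nad' := negbTE nad; have nbd' := negbTE nbd.
have nbf' := negbTE nbf; have ncf' := negbTE ncf.
have nca : e c a = false by rewrite esym.
have nda : e d a = false by rewrite esym.
have ndb : e d b = false by rewrite esym.
have nfb : e f b = false by rewrite esym.
have nfc : e f c = false by rewrite esym.
set S := [set a; b; c; d; f].
have SV : S \subset V.
  by apply/subsetP => x; rewrite !inE => /orP[/orP[/orP[/orP[/eqP->|/eqP->]|/eqP->]|/eqP->]|/eqP->].
have w2 : (clique_number e S <= 2)%N.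
  apply: clique_ub => K KS /forallP cK.
  rewrite leqNgt; apply/negP => /card_gt2P [x [y [z [[xK yK zK] [nxy nyz nzx]]]]].
  have ex u v : u \in K -> v \in K -> u != v -> e u v.
    by move=> uK vK uv; have := forallP (implyP (cK u) uK) v; rewrite vK uv.
  have : [&& e x y, e y z & e x z].
    by rewrite !ex // eq_sym.
  move: (subsetP KS x xK) (subsetP KS y yK) (subsetP KS z zK).
  rewrite !inE => /orP[/orP[/orP[/orP[/eqP->|/eqP->]|/eqP->]|/eqP->]|/eqP->] /orP[/orP[/orP[/orP[/eqP->|/eqP->]|/eqP->]|/eqP->]|/eqP->] /orP[/orP[/orP[/orP[/eqP->|/eqP->]|/eqP->]|/eqP->]|/eqP->];
  by rewrite ?eirr ?nac' ?nad' ?nbd' ?nbf' ?ncf' ?nca ?nda ?ndb ?nfb ?nfc ?andbF ?andFb.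
have c3 : (3 <= chromatic_number e S)%N.
  rewrite /chromatic_number; apply: bigmin_ge_seq.
    apply/card_gt2P; exists a, b, c; split; first by rewrite !inE !eqxx ?orbT.
    split.
    - by apply: contraTneq ab => ->; rewrite eirr.
    - by apply: contraTneq bc => ->; rewrite eirr.
    - by apply: contraTneq cd => ->; rewrite nad'.
  move=> k /existsP[g /andP[/forallP gk /forallP gp]].
  have aS : a \in S by rewrite !inE eqxx.
  have bS : b \in S by rewrite !inE eqxx ?orbT.
  have cS : c \in S by rewrite !inE eqxx ?orbT.
  have dS : d \in S by rewrite !inE eqxx ?orbT.
  have fS : f \in S by rewrite !inE eqxx ?orbT.
  have gne u v : u \in S -> v \in S -> e u v -> val (g u) != val (g v).
    move=> uS vS uv; have := forallP (implyP (gp u) uS) v.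
    by rewrite vS uv /= (inj_eq val_inj).
  have h1 := gne _ _ aS bS ab; have h2 := gne _ _ bS cS bc.
  have h3 := gne _ _ cS dS cd; have h4 := gne _ _ dS fS df.
  have h5 := gne _ _ fS aS fa.
  have k1 := implyP (gk a) aS; have k2 := implyP (gk b) bS.
  have k3 := implyP (gk c) cS; have k4 := implyP (gk d) dS.
  have k5 := implyP (gk f) fS.
  rewrite leqNgt; apply/negP => kl.
  exact: (c5_arith kl k1 k2 k3 k4 k5 h1 h2 h3 h4 h5).
move=> hp; have := hp S SV; move: w2 c3; clear; lia.
Qed.

End Graph.


Module ZPart.
Import GRing.Theory.
Local Open Scope ring_scope.
Section Zn.
Variable n : nat.
Hypothesis hn : (1 < n)%N.
Local Notation R := ('Z_n : finComNzRingType).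

Lemma Zlt (x : R) : (val x < n)%N.
Proof. by have := ltn_ord x; rewrite [X in (_ < X)%N -> _]Zp_cast. Qed.

Lemma Zval (x : R) : x = ((val x)%:R : R).
Proof. by rewrite natr_Zp. Qed.

Lemma valn k : val (k%:R : R) = (k %% n)%N.
Proof. exact: val_Zp_nat. Qed.

Lemma Zeq (x y : R) : (x == y) = (val x == val y).
Proof. by []. Qed.

Lemma dvd_modn d k : (d %| n)%N -> (d %| k %% n)%N = (d %| k)%N.
Proof. by move=> dn; rewrite /dvdn modn_dvdm. Qed.

Definition M (d : nat) : {set R} := [set x : R | (d %| val x)%N].

Lemma natr_inM d k : (d %| n)%N -> (d %| k)%N -> (k%:R : R) \in M d.
Proof. by move=> dn dk; rewrite inE valn dvd_modn. Qed.

Lemma inM d (x : R) : (x \in M d) = (d %| val x)%N.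
Proof. by rewrite inE. Qed.

Lemma M_ideal d : (d %| n)%N -> is_ideal (M d).
Proof.
move=> dn; apply/and3P; split.
- by rewrite inM dvdn0.
- apply/forallP => x; apply/implyP; rewrite inM => dx.
  apply/forallP => y; apply/implyP; rewrite inM => dy.
  by rewrite (Zval x) (Zval y) -natrD natr_inM // dvdn_add.
- apply/forallP => r; apply/forallP => x; apply/implyP; rewrite inM => dx.
  by rewrite (Zval x) (Zval r) -natrM natr_inM // dvdn_mull.
Qed.

Lemma ideal_M (I : {set R}) : is_ideal I -> exists2 d, (d %| n)%N & I = M d.
Proof.
case/and3P => I0 /forallP Iadd /forallP Imul.
have add x y : x \in I -> y \in I -> x + y \in I.
  by move=> xI yI; have := forallP (implyP (Iadd x) xI) y; rewrite yI.
have mul r x : x \in I -> r * x \in I.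
  by move=> xI; have := forallP (Imul r) x; rewrite xI.
have sub x y : x \in I -> y \in I -> x - y \in I.
  by move=> xI yI; rewrite add // -mulN1r mul.
pose P k := (0 < k)%N && [exists x in I, val x == k].
case: (boolP [exists x in I, x != 0]) => [/exists_inP[x xI xn0] | none].
- have exP : exists k, P k.
    exists (val x); rewrite /P lt0n; apply/andP; split => //.
    by apply/exists_inP; exists x.
  case: (ex_minnP exP) => d0 /andP[d0pos /exists_inP[x0 x0I /eqP vx0]] dmin.
  have d0n : (d0 < n)%N by rewrite -vx0 Zlt.
  have kI k : ((k * d0)%:R : R) \in I.
    by rewrite natrM -vx0 -Zval mul.
  have small r : (r < d0)%N -> (r%:R : R) \in I -> r = 0%N.
    move=> rd rI; apply/eqP; apply: contraTT (rd) => r0; rewrite -leqNgt; apply: dmin.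
    rewrite /P lt0n r0 /=; apply/exists_inP; exists (r%:R) => //.
    by rewrite valn modn_small // (ltn_trans rd d0n).
  have d0dn : (d0 %| n)%N.
    apply/dvdnP; exists (n %/ d0)%N; apply/eqP; rewrite {1}(divn_eq n d0) -{2}[(_ * _)%N]addn0 eqn_add2l.
    apply/eqP; apply: small; first by rewrite ltn_mod.
    have -> : ((n %% d0)%N%:R : R) = n%:R - ((n %/ d0) * d0)%N%:R.
      have h : (n%:R : R) = ((n %/ d0) * d0)%N%:R + (n %% d0)%N%:R by rewrite -natrD -divn_eq.
      by rewrite h addrC addKr.
    by rewrite pchar_Zp // sub0r -mulN1r; apply: mul; apply: kI.
  exists d0 => //; apply/setP => y; rewrite inM; apply/idP/idP => [yI|].
    apply/dvdnP; exists (val y %/ d0)%N; apply/eqP.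
    rewrite {1}(divn_eq (val y) d0) -{2}[(_ * _)%N]addn0 eqn_add2l.
    apply/eqP; apply: small; first by rewrite ltn_mod.
    have -> : (((val y) %% d0)%N%:R : R) = y - ((val y %/ d0) * d0)%N%:R.
      have h : y = ((val y %/ d0) * d0)%N%:R + (val y %% d0)%N%:R by rewrite -natrD -divn_eq -Zval.
      by rewrite {2}h addrC addKr.
    by apply: sub => //; apply: kI.
  by case/dvdnP => k hk; rewrite (Zval y) hk; apply: kI.
- exists n => //; apply/setP => y; rewrite inM.
  apply/idP/idP => [yI|].
    have : y == 0 by move: none; rewrite negb_exists_in => /forall_inP/(_ y yI); rewrite negbK.
    by move/eqP->; rewrite dvdn0.
  move=> ny; have : val y = 0%N by move: ny; rewrite /dvdn modn_small ?Zlt // => /eqP.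
  by move=> y0; have -> : y = 0 by apply/val_inj.
Qed.

Lemma natr_M d : (d %| n)%N -> (d%:R : R) \in M d.
Proof. by move=> dn; apply: natr_inM. Qed.

Lemma M_inj d d' : (d %| n)%N -> (d' %| n)%N -> M d = M d' -> d = d'.
Proof.
move=> dn dn' eM; apply/eqP; rewrite eqn_dvd.
have := natr_M dn; rewrite eM inM valn dvd_modn // => ->.
by have := natr_M dn'; rewrite -eM inM valn dvd_modn // => ->.
Qed.

Lemma prod_zeroE d d' : (d %| n)%N -> (d' %| n)%N ->
  ideal_prod_zero (M d) (M d') = (n %| d * d')%N.
Proof.
move=> dn dn'; apply/idP/idP.
  move/forallP/(_ (d%:R))/implyP/(_ (natr_M dn))/forallP/(_ (d'%:R))/implyP/(_ (natr_M dn')).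
  by rewrite -natrM Zeq valn /= /dvdn.
move=> ndd; apply/forallP => x; apply/implyP; rewrite inM => dx.
apply/forallP => y; apply/implyP; rewrite inM => dy.
rewrite (Zval x) (Zval y) -natrM Zeq valn /=; rewrite -/(dvdn n _).
exact: dvdn_trans ndd (dvdn_mul dx dy).
Qed.

Lemma M_n : M n = [set 0 : R].
Proof.
apply/setP => y; rewrite inM !inE Zeq /=.
by rewrite /dvdn modn_small ?Zlt.
Qed.

Lemma zero_idealE d : (d %| n)%N -> zero_ideal (M d) = (d == n).
Proof.
move=> dn; rewrite /zero_ideal; case: (eqVneq d n) => [->|dnn]; first by rewrite M_n eqxx.
apply/negP => /eqP e0.
have dlt : (d < n)%N by rewrite ltn_neqAle dnn dvdn_leq // ltnW.
have := natr_M dn; rewrite e0 inE Zeq valn modn_small //=.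
by move=> /eqP d0; move: dn hn; rewrite d0 dvd0n => /eqP ->.
Qed.

Lemma AG_verticesE (I : {set R}) :
  (I \in AG_vertices R) <-> exists d, [/\ (d %| n)%N, (1 < d)%N, (d < n)%N & I = M d].
Proof.
split.
  rewrite inE => /and3P[Iid Inz /existsP[J /and3P[Jid Jnz IJ]]].
  have [d dn Id] := ideal_M Iid; have [d' dn' Jd] := ideal_M Jid.
  exists d; split => //.
  - have d0 : d != 0%N by apply: contraTneq dn => ->; rewrite dvd0n -lt0n ltnW.
    have d1 : d != 1%N.
      apply/eqP => d1; move: IJ Jnz; rewrite Id Jd prod_zeroE // d1 mul1n zero_idealE //.
      by move=> ndd; rewrite eqn_dvd dn' ndd.
    by rewrite ltn_neqAle lt0n eq_sym d1 d0.
  - by rewrite ltn_neqAle dvdn_leq ?(ltnW hn) // andbT -(zero_idealE dn) -Id.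
case=> d [dn d1 dlt ->]; rewrite inE M_ideal // zero_idealE // (ltn_eqF dlt) /=.
have dpos : (0 < d)%N by apply: ltnW.
have dn' : (n %/ d %| n)%N by apply: dvdn_div.
apply/existsP; exists (M (n %/ d)); rewrite M_ideal // zero_idealE // prod_zeroE //.
rewrite mulnC divnK // dvdnn andbT.
apply/negP => /eqP h; have e := divnK dn; rewrite h in e; nia.
Qed.

Lemma AG_adjE d d' : (d %| n)%N -> (d' %| n)%N ->
  AG_adj (M d) (M d') = (d != d') && (n %| d * d')%N.
Proof.
move=> dn dn'; rewrite /AG_adj prod_zeroE //; congr (_ && _).
apply/idP/idP => h; apply/eqP => e; move: h.
  by rewrite e eqxx.
by rewrite (M_inj dn dn' e) eqxx.
Qed.

Definition dI (I : {set R}) : nat :=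
  if [pick d : 'I_n.+1 | (val d %| n)%N && (M d == I)] is Some d then val d else 0%N.

Lemma dIP (I : {set R}) : is_ideal I -> (dI I %| n)%N /\ M (dI I) = I.
Proof.
move=> Iid; rewrite /dI; case: pickP => [d /andP[dn /eqP ->]//|none].
have [d dn Id] := ideal_M Iid.
have dl : (d < n.+1)%N by rewrite ltnS dvdn_leq // ltnW.
by have := none (Ordinal dl); rewrite /= dn Id eqxx.
Qed.

Lemma dIV (I : {set R}) : I \in AG_vertices R ->
  [/\ (dI I %| n)%N, (1 < dI I)%N, (dI I < n)%N & I = M (dI I)].
Proof.
move=> IV; have := IV; case/AG_verticesE => d [dn d1 dlt Id].
have Iid : is_ideal I by move: IV; rewrite inE => /and3P[].
have [dn' Id'] := dIP Iid.
have -> : dI I = d by apply: M_inj; rewrite // Id'.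
by [].
Qed.

Lemma adjV (I J : {set R}) : I \in AG_vertices R -> J \in AG_vertices R ->
  AG_adj I J = (dI I != dI J) && (n %| dI I * dI J)%N.
Proof.
move=> /dIV[dn _ _ {1}->] /dIV[dn' _ _ {1}->]; exact: AG_adjE.
Qed.

End Zn.
End ZPart.
Import ZPart.


Section Shape.
Variable n : nat.
Hypothesis hn : (1 < n)%N.
Local Notation R := ('Z_n : finComNzRingType).
Local Notation V := (AG_vertices R).
Local Notation e := (@AG_adj R).

Lemma AG_sym : symmetric e.
Proof.
move=> I J; rewrite /AG_adj eq_sym; congr (_ && _).
apply/forallP/forallP => h x; apply/implyP => xJ; apply/forallP => y; apply/implyP => yI.
  by have := forallP (implyP (h y) yI) x; rewrite xJ /= GRing.mulrC.
by have := forallP (implyP (h y) yI) x; rewrite xJ /= GRing.mulrC.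
Qed.

Lemma AG_irr : irreflexive e.
Proof. by move=> I; rewrite /AG_adj eqxx. Qed.

Lemma dI_inj (I J : {set R}) : I \in V -> J \in V -> dI I = dI J -> I = J.
Proof. by move=> /(dIV hn)[_ _ _ hI] /(dIV hn)[_ _ _ hJ] h; rewrite hI hJ h. Qed.

Lemma dI_pos (I : {set R}) : I \in V -> (0 < dI I)%N.
Proof. by move=> /(dIV hn)[_ h _ _]; apply: ltnW. Qed.

Lemma simp_or (S : {set {set R}}) v :
  simplicial e S v \/
  exists q q', [/\ q \in S, q' \in S, e v q, e v q' & q != q'] /\ ~~ e q q'.
Proof.
case: (boolP [forall x in S, forall y in S, (e v x && e v y && (x != y)) ==> e x y]) => [h|].
  left => x y xS yS vx vy xy.
  by have := forallP (implyP (forallP h x) xS) y; rewrite yS vx vy xy.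
rewrite negb_forall_in => /exists_inP[x xS]; rewrite negb_forall_in => /exists_inP[y yS].
rewrite negb_imply => /andP[/andP[/andP[vx vy] xy] nxy].
by right; exists x, y.
Qed.

Definition Pc (m : nat) := forall u u', (0 < u)%N -> (0 < u')%N -> ~~ (m %| u * u')%N ->
  (forall v, (0 < v)%N -> (m %| v * u)%N -> (m %| v * u')%N) \/
  (forall v, (0 < v)%N -> (m %| v * u')%N -> (m %| v * u)%N).

Lemma shape_reduction p a m : prime p -> n = (p ^ a * m)%N -> coprime (p ^ a) m -> Pc m ->
  forall S : {set {set R}}, S \subset V -> S != set0 ->
  exists2 v, v \in S & simplicial e S v \/ dominated e S v.
Proof.
move=> pp nE cop pc S SV /set0Pn[i0 i0S].
have inV I : I \in S -> I \in V by move=> IS; apply: (subsetP SV).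
have pos I : I \in S -> (0 < dI I)%N by move=> IS; apply: dI_pos; apply: inV.
pose x := fun I : {set R} => logn p (dI I).
have ndvd X : (n %| X)%N = (p ^ a %| X)%N && (m %| X)%N by rewrite nE Gauss_dvd.
have pdvd u v : (0 < u)%N -> (0 < v)%N -> (p ^ a %| u * v)%N = (a <= logn p u + logn p v)%N.
  by move=> u0 v0; rewrite pfactor_dvdn ?muln_gt0 ?u0 // lognM.
case: (@arg_minnP _ i0 (fun I => I \in S) x i0S) => p0 p0S p0min.
have adj I J : I \in S -> J \in S -> e I J = (dI I != dI J) && (n %| dI I * dI J)%N.
  by move=> IS JS; apply: adjV => //; apply: inV.
have nbx I : I \in S -> e p0 I -> (a <= x p0 + x I)%N.
  move=> IS; rewrite adj // => /andP[_]; rewrite ndvd => /andP[h _].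
  by rewrite -pdvd // pos.
have domc u u' : u \in S -> u' \in S -> e p0 u' -> u != u' -> ~~ e u u' ->
    (forall v, (0 < v)%N -> (m %| v * dI u)%N -> (m %| v * dI u')%N) -> dominated e S u.
  move=> uS u'S pu' uu' nuu' hm; exists u' => //; split.
  - by rewrite eq_sym.
  - by rewrite AG_sym.
  - move=> y yS; rewrite !adj // => /andP[uy hy].
    have mu : (m %| dI u * dI y)%N by move: hy; rewrite ndvd => /andP[].
    apply/andP; split.
      by apply: contraNneq nuu' => e'; rewrite adj // e' uy hy.
    rewrite ndvd; apply/andP; split.
      rewrite pdvd ?pos //.
      apply: leq_trans (nbx _ u'S pu') _; rewrite addnC leq_add2l; exact: p0min.
    by rewrite mulnC; apply: hm; rewrite ?pos // mulnC.
case: (simp_or S p0) => [sp|[q [q' [[qS q'S pq pq' qq'] nqq']]]].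
  by exists p0 => //; left.
have nm : ~~ (m %| dI q * dI q')%N.
  apply: contra nqq' => mq; rewrite adj //; apply/andP; split.
    by apply: contra qq' => /eqP h; apply/eqP/dI_inj; rewrite ?inV.
  rewrite ndvd mq andbT pdvd ?pos //.
  apply: leq_trans (nbx _ qS pq) _; rewrite addnC leq_add2l; exact: p0min.
case: (pc _ _ (pos _ qS) (pos _ q'S) nm) => hm.
  by exists q => //; right; apply: (domc q q').
exists q' => //; right; apply: (domc q' q) => //; first by rewrite eq_sym.
by rewrite AG_sym.
Qed.

Lemma dom_of (S : {set {set R}}) q q' : S \subset V -> q \in S -> q' \in S -> q != q' -> ~~ e q q' ->
  (forall y, y \in S -> (n %| dI q * dI y)%N -> (n %| dI q' * dI y)%N) -> dominated e S q.
Proof.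
move=> SV qS q'S qq' nqq' h; exists q' => //; split.
- by rewrite eq_sym.
- by rewrite AG_sym.
- move=> y yS; rewrite !adjV ?(subsetP SV) // => /andP[qy hy]; apply/andP; split; last exact: h.
  by apply: contraNneq nqq' => e'; rewrite adjV ?(subsetP SV) // e' qy hy.
Qed.

Lemma cop_primes p q : prime p -> prime q -> p != q -> coprime p q.
Proof. by move=> pp pq; rewrite prime_coprime // dvdn_prime2. Qed.

Lemma bool12 (b0 b1 b2 b3 c0 c1 c2 c3 d0 d1 d2 d3 : bool) :
  [&& b0 || c0, b1 || c1, b2 || c2 & b3 || c3] ->
  [&& b0 || d0, b1 || d1, b2 || d2 & b3 || d3] ->
  ~~ [&& c0 || d0, c1 || d1, c2 || d2 & c3 || d3] ->
  (b0 + b1 + b2 + b3 <= c0 + c1 + c2 + c3)%N ->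
  (b0 + b1 + b2 + b3 <= d0 + d1 + d2 + d3)%N ->
  [&& c0 ==> d0, c1 ==> d1, c2 ==> d2 & c3 ==> d3] || [&& d0 ==> c0, d1 ==> c1, d2 ==> c2 & d3 ==> c3].
Proof.
by case: b0; case: b1; case: b2; case: b3; case: c0; case: c1; case: c2; case: c3;
   case: d0; case: d1; case: d2; case: d3.
Qed.

Lemma imp_or (c d y : bool) : c ==> d -> c || y -> d || y.
Proof. by case: c; case: d. Qed.

Lemma sqfree4_reduction p1 p2 p3 p4 : prime p1 -> prime p2 -> prime p3 -> prime p4 ->
  uniq [:: p1; p2; p3; p4] -> n = (p1 * p2 * p3 * p4)%N ->
  forall S : {set {set R}}, S \subset V -> S != set0 ->
  exists2 v, v \in S & simplicial e S v \/ dominated e S v.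
Proof.
move=> pr1 pr2 pr3 pr4 /and4P[]; rewrite !inE !negb_or => /and3P[n12 n13 n14] /andP[n23 n24] n34 _.
move=> nE S SV /set0Pn[i0 i0S].
have inV I : I \in S -> I \in V by move=> IS; apply: (subsetP SV).
have c12 := cop_primes pr1 pr2 n12; have c13 := cop_primes pr1 pr3 n13.
have c14 := cop_primes pr1 pr4 n14; have c23 := cop_primes pr2 pr3 n23.
have c24 := cop_primes pr2 pr4 n24; have c34 := cop_primes pr3 pr4 n34.
have ndvd X : (n %| X)%N = [&& p1 %| X, p2 %| X, p3 %| X & p4 %| X]%N.
  rewrite nE Gauss_dvd; last by rewrite !coprimeMl c14 c24 c34.
  rewrite Gauss_dvd; last by rewrite !coprimeMl c13 c23.
  by rewrite Gauss_dvd // -!andbA.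
have nd2 u v : (n %| u * v)%N = [&& (p1 %| u) || (p1 %| v), (p2 %| u) || (p2 %| v),
      (p3 %| u) || (p3 %| v) & (p4 %| u) || (p4 %| v)]%N.
  by rewrite ndvd !Euclid_dvdM.
pose w := fun I : {set R} => ((p1 %| dI I) + (p2 %| dI I) + (p3 %| dI I) + (p4 %| dI I))%N.
case: (@arg_minnP _ i0 (fun I => I \in S) w i0S) => p0 p0S p0min.
have adj I J : I \in S -> J \in S -> e I J = (dI I != dI J) && (n %| dI I * dI J)%N.
  by move=> IS JS; apply: adjV => //; apply: inV.
case: (simp_or S p0) => [sp|[q [q' [[qS q'S pq pq' qq'] nqq']]]].
  by exists p0 => //; left.
have nm : ~~ (n %| dI q * dI q')%N.
  apply: contra nqq' => mq; rewrite adj // mq andbT.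
  by apply: contra qq' => /eqP h; apply/eqP/dI_inj; rewrite ?inV.
move: pq pq'; rewrite !adj // => /andP[_ h1] /andP[_ h2].
move: h1 h2 nm; rewrite !nd2 => h1 h2 nm.
have := bool12 h1 h2 nm (p0min _ qS) (p0min _ q'S).
case/orP => /and4P[i1 i2 i3 i4].
  exists q => //; right; apply: (@dom_of S q q' SV) => // y yS; rewrite !nd2.
  case/and4P => a1 a2 a3 a4.
  by rewrite (imp_or i1 a1) (imp_or i2 a2) (imp_or i3 a3) (imp_or i4 a4).
exists q' => //; right; apply: (@dom_of S q' q SV) => //; first by rewrite eq_sym.
  by rewrite AG_sym.
move=> y yS; rewrite !nd2.
case/and4P => a1 a2 a3 a4.
by rewrite (imp_or i1 a1) (imp_or i2 a2) (imp_or i3 a3) (imp_or i4 a4).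
Qed.

Lemma Pc1 : Pc 1.
Proof. by move=> u u' _ _; rewrite dvd1n. Qed.

Lemma Pc_pow q b : prime q -> Pc (q ^ b).
Proof.
move=> pq u u' u0 u'0 _.
have key u1 u2 : (0 < u1)%N -> (0 < u2)%N -> (logn q u1 <= logn q u2)%N ->
    forall v, (0 < v)%N -> (q ^ b %| v * u1)%N -> (q ^ b %| v * u2)%N.
  move=> h1 h2 le v v0; rewrite !pfactor_dvdn ?muln_gt0 ?v0 ?h1 ?h2 // !lognM //.
  move=> h; apply: leq_trans h _; by rewrite leq_add2l.
case: (leqP (logn q u) (logn q u')) => h.
  by left; apply: key.
by right; apply: key => //; apply: ltnW.
Qed.

Lemma bool4 (A B C D : bool) : ~~ ((A || C) && (B || D)) ->
  (forall x y : bool, (x || A) && (y || B) -> (x || C) && (y || D)) \/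
  (forall x y : bool, (x || C) && (y || D) -> (x || A) && (y || B)).
Proof.
by case: A; case: B; case: C; case: D => //= _; first [left; by case; case | right; by case; case].
Qed.

Lemma Pc_pq q r : prime q -> prime r -> q != r -> Pc (q * r).
Proof.
move=> pq pr qr u u' _ _.
have cqr := cop_primes pq pr qr.
have md X : (q * r %| X)%N = (q %| X) && (r %| X) by rewrite Gauss_dvd.
rewrite md !Euclid_dvdM // => h.
case: (bool4 h) => k; [left|right] => v _; rewrite !md !Euclid_dvdM //; exact: k.
Qed.

End Shape.


Section C5.
Variable n : nat.
Hypothesis hn : (1 < n)%N.
Local Notation R := ('Z_n : finComNzRingType).
Local Notation V := (AG_vertices R).
Local Notation e := (@AG_adj R).

Lemma n_pos : (0 < n)%N. Proof. exact: ltnW. Qed.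

Lemma adj_co c c' : (c %| n)%N -> (c' %| n)%N ->
  (n %| (n %/ c) * (n %/ c'))%N = (c * c' %| n)%N.
Proof.
move=> cn c'n.
have c0 : (0 < c)%N by apply: dvdn_gt0 n_pos cn.
have c'0 : (0 < c')%N by apply: dvdn_gt0 n_pos c'n.
rewrite -(@dvdn_pmul2r (c * c')) ?muln_gt0 ?c0 //.
have -> : (n %/ c * (n %/ c') * (c * c') = n * n)%N.
  by rewrite mulnACA divnK // divnK.
by rewrite dvdn_pmul2l // n_pos.
Qed.

Lemma div_inj c c' : (c %| n)%N -> (c' %| n)%N -> (n %/ c = n %/ c')%N -> c = c'.
Proof.
move=> cn c'n h.
have k0 : (0 < n %/ c)%N by rewrite divn_gt0 ?(dvdn_gt0 n_pos cn) // dvdn_leq ?n_pos.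
apply/eqP; rewrite -(eqn_pmul2l k0); apply/eqP.
by rewrite {2}h !divnK.
Qed.

Lemma vert_co c : (c %| n)%N -> (1 < c)%N -> (c < n)%N -> M n (n %/ c) \in V.
Proof.
move=> cn c1 cl; apply/(AG_verticesE hn); exists (n %/ c); split => //.
- exact: dvdn_div.
- have := divnK cn; move: (n %/ c) => k hk; nia.
- have := divnK cn; move: (n %/ c) => k hk; nia.
Qed.

Lemma adj_co_M c c' : (c %| n)%N -> (c' %| n)%N ->
  e (M n (n %/ c)) (M n (n %/ c')) = (c != c') && (c * c' %| n)%N.
Proof.
move=> cn c'n; rewrite AG_adjE ?dvdn_div // adj_co //; congr (_ && _).
apply/idP/idP; apply: contra => /eqP h; apply/eqP; first by rewrite h.
exact: div_inj.
Qed.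

Lemma C5_not_perfect c1 c2 c3 c4 c5 :
  (c1 * c2 %| n)%N -> (c2 * c3 %| n)%N -> (c3 * c4 %| n)%N -> (c4 * c5 %| n)%N -> (c5 * c1 %| n)%N ->
  ~~ (c1 * c3 %| n)%N -> ~~ (c1 * c4 %| n)%N -> ~~ (c2 * c4 %| n)%N ->
  ~~ (c2 * c5 %| n)%N -> ~~ (c3 * c5 %| n)%N ->
  ~ perfect e V.
Proof.
move=> h12 h23 h34 h45 h51 n13 n14 n24 n25 n35.
have dl x y : (x * y %| n)%N -> (x %| n)%N by move=> h; apply: dvdn_trans h; apply: dvdn_mulr.
have dr x y : (x * y %| n)%N -> (y %| n)%N by move=> h; apply: dvdn_trans h; apply: dvdn_mull.
have d1 := dl _ _ h12; have d2 := dl _ _ h23; have d3 := dl _ _ h34.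
have d4 := dl _ _ h45; have d5 := dl _ _ h51.
have ne1 x y z w : (x * y %| n)%N -> ~~ (z * x %| n)%N -> (w * z %| n)%N -> x != 1%N.
  by move=> _ nzx wz; apply: contraNneq nzx => ->; rewrite muln1; apply: dr wz.
have ne1' x y w : (x * y %| n)%N -> ~~ (x * y %| n)%N -> x != w. by move=> ->.
have o1 : c1 != 1%N by apply: contraNneq n13 => ->; rewrite mul1n; apply: dl h34.
have o2 : c2 != 1%N by apply: contraNneq n24 => ->; rewrite mul1n; apply: dl h45.
have o3 : c3 != 1%N by apply: contraNneq n35 => ->; rewrite mul1n; apply: dl h51.
have o4 : c4 != 1%N by apply: contraNneq n14 => ->; rewrite muln1; apply: dl h12.
have o5 : c5 != 1%N by apply: contraNneq n25 => ->; rewrite muln1; apply: dl h23.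
have gt1 x : (x %| n)%N -> x != 1%N -> (1 < x)%N.
  move=> xn x1; rewrite ltn_neqAle eq_sym x1 /= lt0n.
  by apply: contraTneq xn => ->; rewrite dvd0n -lt0n n_pos.
have ltn x y : (x * y %| n)%N -> (y %| n)%N -> y != 1%N -> (x < n)%N.
  move=> hxy yn y1; rewrite ltn_neqAle dvdn_leq ?n_pos ?(dl _ _ hxy) // andbT.
  apply: contra y1 => /eqP xn; move: hxy; rewrite xn -{2}[n]muln1 dvdn_pmul2l ?n_pos //.
  by rewrite dvdn1.
have V1 := vert_co d1 (gt1 _ d1 o1) (ltn _ _ h12 d2 o2).
have V2 := vert_co d2 (gt1 _ d2 o2) (ltn _ _ h23 d3 o3).
have V3 := vert_co d3 (gt1 _ d3 o3) (ltn _ _ h34 d4 o4).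
have V4 := vert_co d4 (gt1 _ d4 o4) (ltn _ _ h45 d5 o5).
have V5 := vert_co d5 (gt1 _ d5 o5) (ltn _ _ h51 d1 o1).
have neq x y z : ~~ (x * z %| n)%N -> (y * z %| n)%N -> x != y.
  by move=> nxz yz; apply: contraNneq nxz => ->.
have neq' x y z : ~~ (z * x %| n)%N -> (z * y %| n)%N -> x != y.
  by move=> nxz yz; apply: contraNneq nxz => ->.
apply: (@not_perfect_C5 _ e (@AG_sym n) (@AG_irr n) V _ _ _ _ _ V1 V2 V3 V4 V5).
- by rewrite adj_co_M // h12 (neq _ _ _ n13 h23).
- by rewrite adj_co_M // h23 (neq _ _ _ n24 h34).
- by rewrite adj_co_M // h34 (neq _ _ _ n35 h45).
- rewrite adj_co_M // h45 andbT; apply: (neq' _ _ c1 n14); by rewrite mulnC.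
- rewrite adj_co_M // h51 andbT eq_sym; apply: (neq _ _ c4 n14); by rewrite mulnC.
- by rewrite adj_co_M // (negbTE n13) andbF.
- by rewrite adj_co_M // (negbTE n14) andbF.
- by rewrite adj_co_M // (negbTE n24) andbF.
- by rewrite adj_co_M // (negbTE n25) andbF.
- by rewrite adj_co_M // (negbTE n35) andbF.
Qed.

End C5.


Definition pp (ps es : seq nat) : nat := \prod_(k <- zip ps es) k.1 ^ k.2.

Lemma pp_cop q ps es : prime q -> q \notin ps -> all prime ps -> coprime q (pp ps es).
Proof.
move=> pq; elim: ps es => [|p ps IH] [|x es] //=; rewrite /pp /= ?big_nil ?coprimen1 //.
rewrite big_cons inE negb_or => /andP[qp qps] /andP[pp1 aps].
rewrite coprimeMr IH // andbT; apply: coprimeXr.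
by rewrite prime_coprime // dvdn_prime2.
Qed.

Lemma pp_dvd n ps es : (0 < n)%N -> all prime ps -> uniq ps ->
  (pp ps es %| n)%N = all (fun k => k.2 <= logn k.1 n)%N (zip ps es).
Proof.
move=> n0; elim: ps es => [|p ps IH] [|x es] //=; rewrite /pp /= ?big_nil ?dvd1n //.
move=> /andP[pp1 aps] /andP[pps ups].
rewrite big_cons Gauss_dvd; last by apply: coprimeXl; rewrite pp_cop.
by rewrite pfactor_dvdn // -IH.
Qed.

Lemma ppM ps es es' : size es = size ps -> size es' = size ps ->
  (pp ps es * pp ps es' = pp ps [seq (x.1 + x.2)%N | x <- zip es es'])%N.
Proof.
elim: ps es es' => [|p ps IH] [|x es] [|y es'] //=; rewrite /pp /= ?big_nil //.
move=> [h1] [h2]; rewrite !big_cons /= expnD mulnACA.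
by congr (_ * _)%N; apply: IH.
Qed.

Definition C5cfg (n : nat) := exists c1 c2 c3 c4 c5 : nat,
  [/\ (c1 * c2 %| n)%N, (c2 * c3 %| n)%N, (c3 * c4 %| n)%N, (c4 * c5 %| n)%N & (c5 * c1 %| n)%N] /\
  [/\ ~~ (c1 * c3 %| n)%N, ~~ (c1 * c4 %| n)%N, ~~ (c2 * c4 %| n)%N,
      ~~ (c2 * c5 %| n)%N & ~~ (c3 * c5 %| n)%N].

Ltac ppsolve := rewrite ppM // pp_dvd //=; lia.

Lemma C5_221 n p q r : (0 < n)%N -> all prime [:: p; q; r] -> uniq [:: p; q; r] ->
  (2 <= logn p n)%N -> (2 <= logn q n)%N -> (1 <= logn r n)%N -> C5cfg n.
Proof.
move=> n0 ap up hA hB hC.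
set ps := [:: p; q; r].
exists (pp ps [:: logn p n; 0; 0]), (pp ps [:: 0; logn q n; 0]), (pp ps [:: 1; 0; logn r n]),
  (pp ps [:: 1; 1; 0]), (pp ps [:: 0; 1; logn r n]).
split; split; ppsolve.
Qed.

Lemma C5_2111 n p q r s : (0 < n)%N -> all prime [:: p; q; r; s] -> uniq [:: p; q; r; s] ->
  (2 <= logn p n)%N -> (1 <= logn q n)%N -> (1 <= logn r n)%N -> (1 <= logn s n)%N -> C5cfg n.
Proof.
move=> n0 ap up hA hB hC hD.
set ps := [:: p; q; r; s].
exists (pp ps [:: logn p n; 0; 0; 0]), (pp ps [:: 0; logn q n; logn r n; 0]),
  (pp ps [:: 1; 0; 0; logn s n]), (pp ps [:: 1; logn q n; 0; 0]), (pp ps [:: 0; 0; logn r n; logn s n]).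
split; split; ppsolve.
Qed.

Lemma C5_11111 n p q r s t : (0 < n)%N -> all prime [:: p; q; r; s; t] -> uniq [:: p; q; r; s; t] ->
  (1 <= logn p n)%N -> (1 <= logn q n)%N -> (1 <= logn r n)%N -> (1 <= logn s n)%N ->
  (1 <= logn t n)%N -> C5cfg n.
Proof.
move=> n0 ap up hA hB hC hD hE.
set ps := [:: p; q; r; s; t].
exists (pp ps [:: logn p n; logn q n; 0; 0; 0]), (pp ps [:: 0; 0; logn r n; logn s n; 0]),
  (pp ps [:: logn p n; 0; 0; 0; logn t n]), (pp ps [:: 0; logn q n; logn r n; 0; 0]),
  (pp ps [:: 0; 0; 0; logn s n; logn t n]).
split; split; ppsolve.
Qed.

Definition forms (n : nat) : Prop :=
  ((exists p1 a1, prime p1 /\ (1 <= a1)%N /\ n = p1 ^ a1) \/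
   (exists p1 p2 a1 a2, prime p1 /\ prime p2 /\ p1 != p2 /\ (1 <= a1)%N /\ (1 <= a2)%N /\
                        n = p1 ^ a1 * p2 ^ a2) \/
   (exists p1 p2 p3 a1, prime p1 /\ prime p2 /\ prime p3 /\ uniq [:: p1; p2; p3] /\
                        (1 <= a1)%N /\ n = p1 ^ a1 * p2 * p3) \/
   (exists p1 p2 p3 p4, prime p1 /\ prime p2 /\ prime p3 /\ prime p4 /\
                        uniq [:: p1; p2; p3; p4] /\ n = p1 * p2 * p3 * p4))%N.

Lemma uniq_neq (s : seq nat) i j : uniq s -> (i < size s)%N -> (j < size s)%N -> i != j ->
  nth 0%N s i != nth 0%N s j.
Proof. by move=> us i0 j0 ij; rewrite nth_uniq. Qed.

Lemma classify n : (1 < n)%N -> forms n \/ C5cfg n.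
Proof.
move=> hn; have n0 : (0 < n)%N by apply: ltnW.
have fact : n = (\prod_(p <- primes n) p ^ logn p n)%N.
  by rewrite {1}(prod_prime_decomp n0) prime_decompE big_map.
have up := primes_uniq n.
have pr p : p \in primes n -> prime p by rewrite mem_primes => /andP[].
have lg p : p \in primes n -> (1 <= logn p n)%N by rewrite logn_gt0.
have nq i j : (i < size (primes n))%N -> (j < size (primes n))%N -> i != j ->
    nth 0%N (primes n) i != nth 0%N (primes n) j by move=> *; apply: uniq_neq.
have mn i : (i < size (primes n))%N -> nth 0%N (primes n) i \in primes n by move=> *; apply: mem_nth.
move: fact nq mn pr lg; case: (primes n) => [|p1 [|p2 [|p3 [|p4 [|p5 s]]]]] => f nq mn pr lg.
- by move: hn; rewrite f big_nil.
- rewrite big_cons big_nil muln1 in f.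
  have m1 := mn 0%N isT.
  by left; left; exists p1, (logn p1 n); rewrite (pr _ m1) (lg _ m1).
- rewrite !big_cons big_nil muln1 in f.
  have m1 := mn 0%N isT; have m2 := mn 1%N isT.
  have n12 := nq 0%N 1%N isT isT isT.
  left; right; left; exists p1, p2, (logn p1 n), (logn p2 n).
  by rewrite (pr _ m1) (pr _ m2) n12 (lg _ m1) (lg _ m2).
- rewrite !big_cons big_nil muln1 in f.
  have m1 := mn 0%N isT; have m2 := mn 1%N isT; have m3 := mn 2%N isT.
  have pr1 := pr _ m1; have pr2 := pr _ m2; have pr3 := pr _ m3.
  have l1 := lg _ m1; have l2 := lg _ m2; have l3 := lg _ m3.
  have n12 := nq 0%N 1%N isT isT isT; have n13 := nq 0%N 2%N isT isT isT.
  have n23 := nq 1%N 2%N isT isT isT.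
  have n21 : p2 != p1 by rewrite eq_sym.
  have n31 : p3 != p1 by rewrite eq_sym.
  have n32 : p3 != p2 by rewrite eq_sym.
  move: f l1 l2 l3; rewrite /=.
  set e1 := logn p1 n; set e2 := logn p2 n; set e3 := logn p3 n => f l1 l2 l3.
  case: (leqP 2 e1) => h1; case: (leqP 2 e2) => h2; case: (leqP 2 e3) => h3.
  + right; apply: (@C5_221 n p1 p2 p3) => //=; by rewrite ?pr1 ?pr2 ?pr3 ?inE ?negb_or ?n12 ?n13 ?n23.
  + right; apply: (@C5_221 n p1 p2 p3) => //=; by rewrite ?pr1 ?pr2 ?pr3 ?inE ?negb_or ?n12 ?n13 ?n23.
  + right; apply: (@C5_221 n p1 p3 p2) => //=; by rewrite ?pr1 ?pr2 ?pr3 ?inE ?negb_or ?n12 ?n13 ?n32.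
  + left; right; right; left; exists p1, p2, p3, e1.
    have e2o : e2 = 1%N by lia. rewrite e2o in f.
    have e3o : e3 = 1%N by lia. rewrite e3o in f.
    by rewrite pr1 pr2 pr3 /= ?inE ?negb_or ?n12 ?n13 ?n23 f !expn1 ?muln1 mulnA.
  + right; apply: (@C5_221 n p2 p3 p1) => //=; by rewrite ?pr1 ?pr2 ?pr3 ?inE ?negb_or ?n21 ?n31 ?n23.
  + left; right; right; left; exists p2, p1, p3, e2.
    have e1o : e1 = 1%N by lia. rewrite e1o in f.
    have e3o : e3 = 1%N by lia. rewrite e3o in f.
    by rewrite pr1 pr2 pr3 /= ?inE ?negb_or ?n21 ?n13 ?n23 f !expn1 ?muln1 mulnCA mulnA.
  + left; right; right; left; exists p3, p1, p2, e3.
    have e1o : e1 = 1%N by lia. rewrite e1o in f.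
    have e2o : e2 = 1%N by lia. rewrite e2o in f.
    by rewrite pr1 pr2 pr3 /= ?inE ?negb_or ?n31 ?n32 ?n12 f !expn1 ?muln1 mulnA mulnC mulnA.
  + left; right; right; left; exists p1, p2, p3, e1.
    have e2o : e2 = 1%N by lia. rewrite e2o in f.
    have e3o : e3 = 1%N by lia. rewrite e3o in f.
    by rewrite pr1 pr2 pr3 /= ?inE ?negb_or ?n12 ?n13 ?n23 f !expn1 ?muln1 mulnA.
- rewrite !big_cons big_nil muln1 in f.
  have m1 := mn 0%N isT; have m2 := mn 1%N isT; have m3 := mn 2%N isT; have m4 := mn 3%N isT.
  have pr1 := pr _ m1; have pr2 := pr _ m2; have pr3 := pr _ m3; have pr4 := pr _ m4.
  have l1 := lg _ m1; have l2 := lg _ m2; have l3 := lg _ m3; have l4 := lg _ m4.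
  have n12 := nq 0%N 1%N isT isT isT; have n13 := nq 0%N 2%N isT isT isT.
  have n14 := nq 0%N 3%N isT isT isT; have n23 := nq 1%N 2%N isT isT isT.
  have n24 := nq 1%N 3%N isT isT isT; have n34 := nq 2%N 3%N isT isT isT.
  move: f l1 l2 l3 l4 n12 n13 n14 n23 n24 n34; rewrite /=.
  set e1 := logn p1 n; set e2 := logn p2 n; set e3 := logn p3 n; set e4 := logn p4 n.
  move=> f l1 l2 l3 l4 n12 n13 n14 n23 n24 n34.
  have n21 : p2 != p1 by rewrite eq_sym.
  have n31 : p3 != p1 by rewrite eq_sym.
  have n32 : p3 != p2 by rewrite eq_sym.
  have n41 : p4 != p1 by rewrite eq_sym.
  have n42 : p4 != p2 by rewrite eq_sym.
  have n43 : p4 != p3 by rewrite eq_sym.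
  case: (leqP 2 e1) => h1.
    right; apply: (@C5_2111 n p1 p2 p3 p4) => //=;
    by rewrite ?pr1 ?pr2 ?pr3 ?pr4 ?inE ?negb_or ?n12 ?n13 ?n14 ?n23 ?n24 ?n34.
  case: (leqP 2 e2) => h2.
    right; apply: (@C5_2111 n p2 p1 p3 p4) => //=;
    by rewrite ?pr1 ?pr2 ?pr3 ?pr4 ?inE ?negb_or ?n21 ?n13 ?n14 ?n23 ?n24 ?n34.
  case: (leqP 2 e3) => h3.
    right; apply: (@C5_2111 n p3 p1 p2 p4) => //=;
    by rewrite ?pr1 ?pr2 ?pr3 ?pr4 ?inE ?negb_or ?n31 ?n32 ?n12 ?n14 ?n24 ?n34.
  case: (leqP 2 e4) => h4.
    right; apply: (@C5_2111 n p4 p1 p2 p3) => //=;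
    by rewrite ?pr1 ?pr2 ?pr3 ?pr4 ?inE ?negb_or ?n41 ?n42 ?n43 ?n12 ?n13 ?n23.
  left; right; right; right; exists p1, p2, p3, p4.
  have e1o : e1 = 1%N by lia. rewrite e1o in f.
  have e2o : e2 = 1%N by lia. rewrite e2o in f.
  have e3o : e3 = 1%N by lia. rewrite e3o in f.
  have e4o : e4 = 1%N by lia. rewrite e4o in f.
  by rewrite pr1 pr2 pr3 pr4 /= ?inE ?negb_or ?n12 ?n13 ?n14 ?n23 ?n24 ?n34 f !expn1 ?muln1 !mulnA.
- right.
  have m1 := mn 0%N isT; have m2 := mn 1%N isT; have m3 := mn 2%N isT; have m4 := mn 3%N isT.
  have m5 := mn 4%N isT.
  have n12 := nq 0%N 1%N isT isT isT; have n13 := nq 0%N 2%N isT isT isT.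
  have n14 := nq 0%N 3%N isT isT isT; have n15 := nq 0%N 4%N isT isT isT.
  have n23 := nq 1%N 2%N isT isT isT; have n24 := nq 1%N 3%N isT isT isT.
  have n25 := nq 1%N 4%N isT isT isT; have n34 := nq 2%N 3%N isT isT isT.
  have n35 := nq 2%N 4%N isT isT isT; have n45 := nq 3%N 4%N isT isT isT.
  move: m1 m2 m3 m4 m5 n12 n13 n14 n15 n23 n24 n25 n34 n35 n45; rewrite /=.
  move=> m1 m2 m3 m4 m5 n12 n13 n14 n15 n23 n24 n25 n34 n35 n45.
  apply: (@C5_11111 n p1 p2 p3 p4 p5); rewrite /= ?pr ?lg //.
  by rewrite !inE !negb_or n12 n13 n14 n15 n23 n24 n25 n34 n35 n45.
Qed.


Theorem theorem1 (n : nat) (hn : (2 <= n)%N) :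
  perfect (@AG_adj ('Z_n : finComNzRingType)) (AG_vertices ('Z_n : finComNzRingType)) <->
  ((exists p1 a1, prime p1 /\ (1 <= a1)%N /\ n = p1 ^ a1) \/
   (exists p1 p2 a1 a2, prime p1 /\ prime p2 /\ p1 != p2 /\ (1 <= a1)%N /\ (1 <= a2)%N /\
                        n = p1 ^ a1 * p2 ^ a2) \/
   (exists p1 p2 p3 a1, prime p1 /\ prime p2 /\ prime p3 /\ uniq [:: p1; p2; p3] /\
                        (1 <= a1)%N /\ n = p1 ^ a1 * p2 * p3) \/
   (exists p1 p2 p3 p4, prime p1 /\ prime p2 /\ prime p3 /\ prime p4 /\
                        uniq [:: p1; p2; p3; p4] /\ n = p1 * p2 * p3 * p4))%N.
Proof.
have hn' : (1 < n)%N := hn.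
change (perfect (@AG_adj ('Z_n : finComNzRingType)) (AG_vertices ('Z_n : finComNzRingType)) <-> forms n).
split.
  move=> hp; case: (classify hn') => // [[c1 [c2 [c3 [c4 [c5 [[h12 h23 h34 h45 h51] [n13 n14 n24 n25 n35]]]]]]]].
  by exfalso; apply: (C5_not_perfect hn' h12 h23 h34 h45 h51 n13 n14 n24 n25 n35 hp).
have red := @perfect_of_reduction _ _ (@AG_sym n) (@AG_irr n) (AG_vertices ('Z_n : finComNzRingType)).
case=> [[p [a [pp [a1 E]]]] | [[p1 [p2 [a1 [a2 [pr1 [pr2 [n12 [h1 [h2 E]]]]]]]]] |
        [[p1 [p2 [p3 [a1 [pr1 [pr2 [pr3 [u [h1 E]]]]]]]]] |
         [p1 [p2 [p3 [p4 [pr1 [pr2 [pr3 [pr4 [u E]]]]]]]]]]]]; apply: red.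
- apply: (@shape_reduction n hn' p a 1%N pp) => //.
  + by rewrite muln1.
  + exact: coprimen1.
  + exact: Pc1.
- apply: (@shape_reduction n hn' p1 a1 (p2 ^ a2)%N pr1 E) => //.
  + by apply: coprimeXl; apply: coprimeXr; apply: cop_primes.
  + exact: Pc_pow.
- have n23 : p2 != p3 by apply: contraTneq u => ->; rewrite /= !inE eqxx ?orbT ?orTb ?andbF ?andFb.
  have n12 : p1 != p2 by apply: contraTneq u => ->; rewrite /= !inE eqxx ?orbT ?orTb ?andbF ?andFb.
  have n13 : p1 != p3 by apply: contraTneq u => ->; rewrite /= !inE eqxx ?orbT ?orTb ?andbF ?andFb.
  apply: (@shape_reduction n hn' p1 a1 (p2 * p3)%N pr1).
  + by rewrite E mulnA.
  + by apply: coprimeXl; rewrite coprimeMr !cop_primes.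
  + exact: Pc_pq.
- exact: (@sqfree4_reduction n hn' p1 p2 p3 p4).
Qed.
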